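(* Let $N$ be a finite group, let $\pi$ be the set of prime divisors of $|N|$, and assume that $\mathrm{Hol}(N)$ has a unique Hall $\pi$-subgroup $Q$. Let $G$ be a subgroup of $\mathrm{Hol}(N)$ and $H$ any subgroup of $G$. Then: (a) if $G$ is transitive, then $G\cap Q$ is also transitive; (b) if every prime factor of $[G:H]$ divides $|N|$, then $[G:H]=[G\cap Q:H\cap Q]$.
   Context: $\mathrm{Hol}(N)=N\rtimes\mathrm{Aut}(N)$ acts on $N$ by $(\eta,\alpha)\cdot x=\eta\,\alpha(x)$; a subgroup is transitive if it acts transitively on $N$. *)

(* Defs.v *)
From mathcomp Require Import all_boot all_fingroup all_solvable.
Set Implicit Arguments. Unset Strict Implicit. Unset Printing Implicit Defensive.
Local Open Scope group_scope.

(* The holomorph Hol(N) = N x| Aut(N) of a finite group N (here N is the whole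
   finGroupType gT), realized faithfully through its natural action on N:
   the pair (eta, alpha) acts as x |-> eta * alpha x. *)
Definition holo (gT : finGroupType) : {set {perm gT}} :=
  [set p : {perm gT} | [exists eta : gT, exists a in Aut [set: gT],
                          [forall x : gT, p x == eta * a x]]].

Definition transitive_on_N (gT : finGroupType) (G : {set {perm gT}}) : bool :=
  [transitive G, on [set: gT] | 'P].

(* Main.v *)
Require Import Defs.
From mathcomp Require Import all_boot all_fingroup all_solvable.
Local Open Scope group_scope.

Lemma holo_group_set (gT : finGroupType) : group_set (holo gT).
Proof.
apply/group_setP; split.
  rewrite inE; apply/existsP; exists 1.
  apply/existsP; exists 1; rewrite group1 /=; apply/forallP => x.
  by rewrite !perm1 mul1g.
move=> p q; rewrite !inE => /existsP[e /existsP[a /andP[Aa /forallP pE]]].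
move=> /existsP[f /existsP[b /andP[Ab /forallP qE]]].
apply/existsP; exists (f * b e); apply/existsP; exists (a * b).
rewrite groupM //=; apply/forallP => x.
have bM := morphicP (Aut_morphic Ab).
by rewrite !permM (eqP (pE x)) (eqP (qE _)) bM ?in_setT // mulgA.
Qed.

Canonical holo_group (gT : finGroupType) := Group (holo_group_set gT).

Section Main.
Variables (gT : finGroupType) (Q : {group {perm gT}}).
Hypothesis hQ : \pi(#|gT|).-Hall(holo gT) Q.
Hypothesis uQ : forall Q' : {group {perm gT}}, \pi(#|gT|).-Hall(holo gT) Q' -> Q' = Q.

Lemma Q_normal : Q <| holo_group gT.
Proof.
rewrite /normal (pHall_sub hQ) /=; apply/subsetP => x Hx.
suff /(congr1 val) /= E : (Q :^ x)%G = Q by rewrite inE E.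
by apply: uQ; rewrite /= -{1}(conjGid Hx) pHallJ2.
Qed.

Lemma index_part (G H : {group {perm gT}}) :
  G \subset holo gT -> H \subset G -> \pi(#|gT|).-nat #|G : H| ->
  #|G : H| = #|G :&: Q : H :&: Q|.
Proof.
move=> sGHol sHG piGH.
have hG : \pi(#|gT|).-Hall(G) (Q :&: G) := setI_normal_Hall Q_normal hQ sGHol.
have hH : \pi(#|gT|).-Hall(H) (Q :&: H)
  := setI_normal_Hall Q_normal hQ (subset_trans sHG sGHol).
have sI : H :&: Q \subset G :&: Q by rewrite setSI.
apply/eqP; rewrite -(eqn_pmul2l (cardG_gt0 (H :&: Q)%G)) Lagrange //=.
have cG : #|G :&: Q| = (#|G|`_(\pi(#|gT|)))%N by rewrite setIC -(card_Hall hG).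
have cH : #|H :&: Q| = (#|H|`_(\pi(#|gT|)))%N by rewrite setIC -(card_Hall hH).
rewrite cG cH.
rewrite -(Lagrange sHG) partnM ?cardG_gt0 ?indexg_gt0 //.
by rewrite (part_pnat_id piGH).
Qed.

End Main.

Theorem lemma2p1 (gT : finGroupType) (Q : {group {perm gT}})
  (hQ : \pi(#|gT|).-Hall(holo gT) Q)
  (uQ : forall Q' : {group {perm gT}}, \pi(#|gT|).-Hall(holo gT) Q' -> Q' = Q)
  (G H : {group {perm gT}}) (sGHol : G \subset holo gT) (sHG : H \subset G) :
  (transitive_on_N G -> transitive_on_N (G :&: Q)) /\
  ((forall p : nat, prime p -> p %| #|G : H| -> p %| #|gT|) ->
     #|G : H| = #|G :&: Q : H :&: Q|).
Proof.
have h0 : 0 < #|gT| by apply/card_gt0P; exists 1.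
have pinat (K L : {group {perm gT}}) :
    (forall p : nat, prime p -> p %| #|K : L| -> p %| #|gT|) ->
    \pi(#|gT|).-nat #|K : L|.
  move=> hp; apply/pnatP; first exact: indexg_gt0.
  by move=> p pp dp; rewrite mem_primes pp h0 hp.
split; last first.
  by move=> hp; apply: index_part => //; apply: pinat.
move=> trG; set x : gT := 1.
have orbG := atransP trG x (in_setT x).
have sCG : 'C_G[x | 'P] \subset G by apply: subsetIl.
have cG : #|G : 'C_G[x | 'P]| = #|gT|.
  by rewrite -card_orbit orbG cardsT.
have eq1 : #|gT| = #|G :&: Q : 'C_G[x | 'P] :&: Q|.
  rewrite -cG; apply: (@index_part gT Q hQ uQ G _ sGHol sCG); rewrite cG; apply/pnatP => // p pp dp; by rewrite mem_primes pp h0.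
have stab : 'C_(G :&: Q)[x | 'P] = 'C_G[x | 'P] :&: Q.
  by rewrite /= setIAC.
have corb : #|orbit 'P (G :&: Q) x| = #|gT|.
  by rewrite card_orbit stab -eq1.
rewrite /transitive_on_N /atrans; apply/imsetP; exists x; first exact: in_setT.
apply/esym/eqP; by rewrite eqEcard subsetT cardsT corb leqnn.
Qed.
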